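(* Let $\mathcal T$ be an orbital category. The monotone map $\mathfrak R:\mathrm{wIndSys}^{uni}_{\mathcal T}\to\mathrm{Transf}_{\mathcal T}$ has a fully faithful right adjoint, given by the composite of the inverse of the bijection $\mathfrak R|:\mathrm{IndSys}_{\mathcal T}\xrightarrow{\sim}\mathrm{Transf}_{\mathcal T}$ with the inclusion $\mathrm{IndSys}_{\mathcal T}\hookrightarrow\mathrm{wIndSys}^{uni}_{\mathcal T}$, and a fully faithful left adjoint given by $R\mapsto\overline{\underline{\mathbb F}}_R$.
   Context: For a small category $\mathcal T$, $\mathbb F_{\mathcal T}$ is the full subcategory of $\mathrm{Fun}(\mathcal T^{op},\mathrm{Set})$ on finite coproducts of representables; $\mathcal T$ is orbital if $\mathbb F_{\mathcal T}$ has pullbacks. $\mathbb F_V:=\mathbb F_{\mathcal T,/V}$, $*_V$ terminal, $\emptyset_V$ initial, $n\cdot S$ the $n$-fold coproduct; for $U\to V$, $\mathrm{Res}^V_U$ is pullback and $\mathrm{Ind}^V_U$ postcomposition. A full $\mathcal T$-subcategory assigns isomorphism-closed classes $\mathcal C_V\subseteq\mathrm{Ob}\,\mathbb F_V$ stable under restriction. For $S\in\mathbb F_V$ with orbits $U$ and $T_U\in\mathbb F_U$, $\coprod_U^ST_U:=\coprod_U\mathrm{Ind}_U^VT_U$. A $\mathcal T$-weak indexing system is a full $\mathcal T$-subcategory with $\mathcal C_V\neq\emptyset\Rightarrow *_V\in\mathcal C_V$ and closed under $\coprod^S_UT_U$ for $S\in\mathcal C_V$, $T_U\in\mathcal C_U$.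 It is unital if every $\mathcal C_V$ is nonempty and $S\sqcup S'\in\mathcal C_V\Rightarrow S,S'\in\mathcal C_V$; an indexing system if moreover each $\mathcal C_V$ is closed under finite coproducts. $\mathrm{wIndSys}^{uni}_{\mathcal T}\supseteq\mathrm{IndSys}_{\mathcal T}$ are the posets under inclusion; the poset of weak indexing systems has arbitrary meets (intersections), so for any collection $\mathcal D$ there is a smallest weak indexing system $\mathrm{Cl}_\infty(\mathcal D)$ containing it, and joins $\vee$ exist. A transfer system is a wide subcategory $R\subseteq\mathcal T$ containing all isomorphisms such that for every commutative square $V'\to V$, $\alpha':V'\to U'$, $\alpha:V\to U$, $U'\to U$ in $\mathcal T$ with $\alpha\in R$ and the induced map $V'\to V\times_UU'$ in $\mathbb F_{\mathcal T}$ a summand inclusion, $\alpha'\in R$; $\mathrm{Transf}_{\mathcal T}$ is their poset. $\mathfrak R(\mathcal C)$ is the set of maps $U\to V$ in $\mathcal T$ such that $U$, viewed as a $V$-set, lies in $\mathcal C_V$; it is a transfer system for unital $\mathcal C$, and it is a known fact that $\mathfrak R$ restricts to a bijection $\mathrm{IndSys}_{\mathcal T}\to\mathrm{Transf}_{\mathcal T}$. $\underline{\mathbb F}^0_{\mathcal T}$ has $V$-values $\{\emptyset_V,*_V\}$, and $\overline{\underline{\mathbb F}}_R:=\underline{\mathbb F}^0_{\mathcal T}\vee\mathrm{Cl}_\infty\big(\{\mathrm{Res}^W_VU\mid (U\to W)\in R,\ (V\to W)\in\mathcal T\}\big)$, where $U$ is regarded as a $W$-set. Adjoints of monotone maps: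 $L\dashv\pi$ iff $L(x)\le y\iff x\le\pi(y)$; fully faithful means order-reflecting. *)

(* Defs.v *)
From mathcomp Require Import all_boot.

Set Implicit Arguments.
Unset Strict Implicit.
Unset Printing Implicit Defensive.

Record smallCat := SmallCat {
  Ob : Type;
  Ar : Type;
  dom : Ar -> Ob;
  cod : Ar -> Ob;
  idc : Ob -> Ar;
  comp : Ar -> Ar -> Ar;
  dom_id : forall x, dom (idc x) = x;
  cod_id : forall x, cod (idc x) = x;
  dom_comp : forall f g, cod f = dom g -> dom (comp g f) = dom f;
  cod_comp : forall f g, cod f = dom g -> cod (comp g f) = cod g;
  comp_idl : forall f, comp (idc (cod f)) f = f;
  comp_idr : forall f, comp f (idc (dom f)) = f;
  comp_assoc : forall f g h, cod f = dom g -> cod g = dom h ->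
     comp h (comp g f) = comp (comp h g) f
}.

Section FT.
Variable T : smallCat.

(* F_T : finite coproducts of representables, presented as the free    *)
(* finite-coproduct completion of T: an object is a finite family of    *)
(* objects of T; a morphism (fmap, farr) sends summand i to summand      *)
(* fmap i via the arrow farr i.                                         *)
Record fobj := FObj { fidx : finType; fo : fidx -> Ob T }.

Record fmor (X Y : fobj) := FMor { fmap : fidx X -> fidx Y; farr : fidx X -> Ar T }.

Definition fvalid (X Y : fobj) (f : fmor X Y) : Prop :=
  forall i, dom (farr f i) = fo i /\ cod (farr f i) = fo (fmap f i).

Definition fcomp (X Y Z : fobj) (g : fmor Y Z) (f : fmor X Y) : fmor X Z :=
  FMor (fun i => fmap g (fmap f i)) (fun i => comp (farr g (fmap f i)) (farr f i)).

Definition fid (X : fobj) : fmor X X := FMor (fun i => i) (fun i => idc (fo i)).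

Definition feq (X Y : fobj) (f g : fmor X Y) : Prop :=
  forall i, fmap f i = fmap g i /\ farr f i = farr g i.

Definition fiso (X Y : fobj) (f : fmor X Y) : Prop :=
  fvalid f /\ exists g : fmor Y X,
    fvalid g /\ feq (fcomp g f) (fid X) /\ feq (fcomp f g) (fid Y).

Definition isPullback (X Y Z P : fobj) (f : fmor X Z) (g : fmor Y Z)
    (p1 : fmor P X) (p2 : fmor P Y) : Prop :=
  fvalid p1 /\ fvalid p2 /\ feq (fcomp f p1) (fcomp g p2) /\
  forall (W : fobj) (q1 : fmor W X) (q2 : fmor W Y),
    fvalid q1 -> fvalid q2 -> feq (fcomp f q1) (fcomp g q2) ->
    exists u : fmor W P, fvalid u /\ feq (fcomp p1 u) q1 /\ feq (fcomp p2 u) q2 /\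
      forall u' : fmor W P, fvalid u' -> feq (fcomp p1 u') q1 ->
        feq (fcomp p2 u') q2 -> feq u u'.

Definition fcoprod (X Y : fobj) : fobj :=
  @FObj (fidx X + fidx Y)%type
        (fun k => match k with inl i => fo i | inr j => fo j end).

Definition finl (X Y : fobj) : fmor X (fcoprod X Y) :=
  @FMor X (fcoprod X Y) (fun i => inl i) (fun i => idc (fo i)).

Definition summandIncl (X Y : fobj) (f : fmor X Y) : Prop :=
  exists (Z : fobj) (h : fmor (fcoprod X Z) Y), fiso h /\ feq (fcomp h (finl X Z)) f.

Definition orbital : Prop :=
  forall (X Y Z : fobj) (f : fmor X Z) (g : fmor Y Z), fvalid f -> fvalid g ->
    exists (P : fobj) (p1 : fmor P X) (p2 : fmor P Y), isPullback f g p1 p2.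

Definition rep (V : Ob T) : fobj := @FObj unit (fun _ => V).
Definition repArr (U V : Ob T) (a : Ar T) : fmor (rep U) (rep V) :=
  @FMor (rep U) (rep V) (fun _ => tt) (fun _ => a).

(* F_V = F_{T,/V}: objects of F_T with a structure map to y(V).         *)
Record vset (V : Ob T) := VSet {
  vS : fobj;
  varr : fidx vS -> Ar T;
  vdom : forall i, dom (varr i) = fo i;
  vcod : forall i, cod (varr i) = V
}.
Arguments varr {V} v i.
Arguments vdom {V} v i.
Arguments vcod {V} v i.

Definition vstr (V : Ob T) (S : vset V) : fmor (vS S) (rep V) :=
  @FMor (vS S) (rep V) (fun _ => tt) (varr S).

Definition vsiso (V : Ob T) (S S' : vset V) : Prop :=
  exists f : fmor (vS S) (vS S'), fiso f /\ feq (fcomp (vstr S') f) (vstr S).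

Definition vterm (V : Ob T) : vset V :=
  @VSet V (rep V) (fun _ => idc V) (fun _ => dom_id V) (fun _ => cod_id V).

Definition vempty (V : Ob T) : vset V :=
  @VSet V (@FObj void (fun v => match v with end)) (fun v => match v with end)
        (fun v => match v with end) (fun v => match v with end).

Definition vcoprod (V : Ob T) (S S' : vset V) : vset V.
Proof.
refine (@VSet V (fcoprod (vS S) (vS S'))
          (fun k => match k with inl i => varr S i | inr j => varr S' j end) _ _).
- by case=> i /=; apply: vdom.
- by case=> i /=; apply: vcod.
Defined.

Definition vbig (V : Ob T) (I : finType) (F : I -> vset V) : vset V.
Proof.
refine (@VSet V (@FObj {i : I & fidx (vS (F i))}
                       (fun p => fo (tagged p)))
          (fun p => varr (F (tag p)) (tagged p)) _ _).
- by case=> i j /=; apply: vdom.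
- by case=> i j /=; apply: vcod.
Defined.

Definition vInd (U V : Ob T) (a : Ar T) (ha : dom a = U) (hb : cod a = V)
    (X : vset U) : vset V.
Proof.
refine (@VSet V (vS X) (fun i => comp a (varr X i)) _ _).
- move=> i; rewrite dom_comp ?vdom //; by rewrite vcod ha.
- move=> i; rewrite cod_comp ?hb //; by rewrite vcod ha.
Defined.

(* coprod^S_U T_U := coprod_U Ind^V_U T_U, U ranging over the orbits of S *)
Definition vbigInd (V : Ob T) (S : vset V)
    (Tf : forall i : fidx (vS S), vset (fo i)) : vset V :=
  vbig (fun i => vInd (vdom S i) (vcod S i) (Tf i)).

Definition isRes (U V : Ob T) (a : Ar T) (S : vset V) (X : vset U) : Prop :=
  dom a = U /\ cod a = V /\
  exists p1 : fmor (vS X) (vS S), isPullback (vstr S) (repArr U V a) p1 (vstr X).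

(* an arrow a : U -> V viewed as the V-set U *)
Definition orbitV (a : Ar T) : vset (cod a) :=
  @VSet (cod a) (rep (dom a)) (fun _ => a) (fun _ => erefl) (fun _ => erefl).

Definition coll := forall V : Ob T, vset V -> Prop.

Definition subC (C D : coll) : Prop := forall V (S : vset V), C V S -> D V S.

Definition fullTsub (C : coll) : Prop :=
  (forall V (S S' : vset V), vsiso S S' -> C V S -> C V S') /\
  (forall U V (a : Ar T) (S : vset V) (X : vset U), C V S -> isRes a S X -> C U X).

Definition wIndSys (C : coll) : Prop :=
  fullTsub C /\
  (forall V, (exists S, C V S) -> C V (vterm V)) /\
  (forall V (S : vset V) (Tf : forall i : fidx (vS S), vset (fo i)),
     C V S -> (forall i, C (fo i) (Tf i)) -> C V (vbigInd Tf)).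

Definition uniWIndSys (C : coll) : Prop :=
  wIndSys C /\ (forall V, exists S, C V S) /\
  (forall V (S S' : vset V), C V (vcoprod S S') -> C V S /\ C V S').

Definition IndSys (C : coll) : Prop :=
  uniWIndSys C /\ (forall V, C V (vempty V)) /\
  (forall V (S S' : vset V), C V S -> C V S' -> C V (vcoprod S S')).

Definition Clinf (D : coll) : coll :=
  fun V S => forall C, wIndSys C -> subC D C -> C V S.

Definition wjoin (C D : coll) : coll := Clinf (fun V S => C V S \/ D V S).

Definition isoT (a : Ar T) : Prop :=
  exists b, dom b = cod a /\ cod b = dom a /\
    comp b a = idc (dom a) /\ comp a b = idc (cod a).

Definition subT (R R' : Ar T -> Prop) : Prop := forall a, R a -> R' a.

Definition transfer (R : Ar T -> Prop) : Prop :=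
  (forall a, isoT a -> R a) /\
  (forall f g, cod f = dom g -> R f -> R g -> R (comp g f)) /\
  (forall (V' U' V U : Ob T) (a' a v w : Ar T),
     dom a' = V' -> cod a' = U' -> dom a = V -> cod a = U ->
     dom v = V' -> cod v = V -> dom w = U' -> cod w = U ->
     comp a v = comp w a' -> R a ->
     forall (P : fobj) (p1 : fmor P (rep V)) (p2 : fmor P (rep U'))
            (u : fmor (rep V') P),
       isPullback (repArr V U a) (repArr U' U w) p1 p2 ->
       fvalid u -> feq (fcomp p1 u) (repArr V' V v) ->
       feq (fcomp p2 u) (repArr V' U' a') ->
       summandIncl u -> R a').

Definition frakR (C : coll) : Ar T -> Prop := fun a => C (cod a) (orbitV a).

Definition F0 : coll := fun V S => vsiso (vempty V) S \/ vsiso (vterm V) S.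

Definition genR (R : Ar T -> Prop) : coll :=
  fun V X => exists u v : Ar T, R u /\ isRes v (orbitV u) X.

Definition Fbar (R : Ar T -> Prop) : coll := wjoin F0 (Clinf (genR R)).

End FT.

(* Main.v *)
Require Import Defs.
From mathcomp Require Import all_boot.

Unset Implicit Arguments.
Unset Strict Implicit.
Unset Printing Implicit Defensive.
Local Notation comp := Defs.comp.
#[local] Arguments varr {T V} v i.
#[local] Arguments vdom {T V} v i.
#[local] Arguments vcod {T V} v i.

Section Work.
Variable T : smallCat.
Implicit Types (V U W : Ob T) (X Y Z : fobj T).

Lemma comp_idid (x : Ob T) : comp (idc x) (idc x) = idc x.
Proof. by have := comp_idl (idc x); rewrite cod_id. Qed.

Lemma iso_idc V (S S' : vset V) (m : fidx (vS S) -> fidx (vS S'))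
  (m' : fidx (vS S') -> fidx (vS S)) :
  cancel m m' -> cancel m' m -> (forall i, fo (m i) = fo i) ->
  (forall i, varr S' (m i) = varr S i) -> vsiso S S'.
Proof.
move=> K K' hfo hv.
have hfo' : forall j, fo (m' j) = fo j.
  by move=> j; have := hfo (m' j); rewrite K'.
exists (FMor m (fun i => idc (fo i))); split; last first.
  move=> i /=; split => //.
  have := comp_idr (varr S' (m i)); rewrite vdom hfo => ->; exact: hv.
split; first by move=> i /=; rewrite dom_id cod_id hfo.
exists (FMor m' (fun j => idc (fo j))); split.
  by move=> i /=; rewrite dom_id cod_id hfo'.
split.
  by move=> i /=; split; [exact: K | rewrite hfo comp_idid].
by move=> i /=; split; [exact: K' | rewrite hfo' comp_idid].
Qed.

Lemma iso_idc' V (S S' : vset V) (m : fidx (vS S) -> fidx (vS S'))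
  (m' : fidx (vS S') -> fidx (vS S)) :
  cancel m m' -> cancel m' m -> (forall i, fo (m i) = fo i) ->
  (forall i, varr S' (m i) = varr S i) -> vsiso S' S.
Proof.
move=> K K' hfo hv; apply: (iso_idc _ _ _ _ _ K' K).
  by move=> j; have := hfo (m' j); rewrite K'.
by move=> j; have := hv (m' j); rewrite K'.
Qed.

Lemma vsiso_refl V (S : vset V) : vsiso S S.
Proof. by apply: (@iso_idc _ _ _ id id). Qed.

Lemma fiso_fid (X : fobj T) : fiso (fid X).
Proof.
split; first by move=> i /=; rewrite dom_id cod_id.
exists (fid X); split; first by move=> i /=; rewrite dom_id cod_id.
by split=> i /=; split => //; rewrite comp_idid.
Qed.

Lemma fiso_comp_iso (X Y : fobj T) (f : fmor X Y) : fiso f ->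
  exists g : fmor Y X, fvalid g /\ (forall j, fmap f (fmap g j) = j) /\
   (forall j, isoT (farr g j)).
Proof.
case=> vf [g [vg [e1 e2]]]; exists g; split=> //; split.
  by move=> j; case: (e2 j).
move=> j; exists (farr f (fmap g j)).
case: (vf (fmap g j)) => d1 c1; case: (vg j) => d2 c2.
case: (e2 j) => /= m2 a2; case: (e1 (fmap g j)) => /= m1 a1.
rewrite m2 in a1.
split; first by rewrite d1 c2.
split; first by rewrite c1 d2 m2.
by rewrite d2 a2 c2 a1.
Qed.


Lemma Clinf_w (Dg : coll T) : wIndSys (Clinf Dg).
Proof.
split; [split|split].
- move=> V S S' hi hS C hC hsub; case: (hC) => [[hiso _] _]; exact: hiso (hS C hC hsub).
- move=> U V a S X hS hr C hC hsub; case: (hC) => [[_ hres] _]; exact: hres (hS C hC hsub) hr.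
- move=> V [S hS] C hC hsub; case: (hC) => [_ [ht _]]; apply: ht; exists S; exact: hS C hC hsub.
- move=> V S Tf hS hT C hC hsub; case: (hC) => [_ [_ hb]]; apply: hb.
    exact: hS C hC hsub.
  by move=> i; apply: hT.
Qed.

Lemma coprod_empty V (S : vset V) : vsiso S (vcoprod S (vempty V)).
Proof.
pose m' := fun k : fidx (vS (vcoprod S (vempty V))) =>
  match k return fidx (vS S) with inl i => i | inr v => match v with end end.
pose m := (fun i => inl i) : fidx (vS S) -> fidx (vS (vcoprod S (vempty V))).
apply: (@iso_idc _ S _ m m') => //.
by case=> // [[]].
Qed.

Definition selT V (S S' : vset V) (b : bool) :
  forall k : fidx (vS (vcoprod S S')), vset (fo k) :=
  fun k => match k as k0 return vset (fo (f:=vS (vcoprod S S')) k0) with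
   | inl i => if b then vterm (fo i) else vempty (fo i)
   | inr j => if b then vempty (fo j) else vterm (fo j) end.

Lemma sel_l V (S S' : vset V) : vsiso (vbigInd (selT _ S S' true)) S.
Proof.
pose m := fun i : fidx (vS S) =>
  (existT (fun k => fidx (vS (selT _ S S' true k))) (inl i) tt
   : fidx (vS (vbigInd (selT _ S S' true)))).
pose m' := fun p : fidx (vS (vbigInd (selT _ S S' true))) =>
  match p return fidx (vS S) with
  | existT (inl i) _ => i
  | existT (inr j) v => match v with end end.
apply: (@iso_idc' _ _ _ m m') => //.
- by case=> [[i []|j []]].
- move=> i /=; have := comp_idr (varr S i); by rewrite vdom.
Qed.

Lemma sel_r V (S S' : vset V) : vsiso (vbigInd (selT _ S S' false)) S'.
Proof.
pose m := fun i : fidx (vS S') =>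
  (existT (fun k => fidx (vS (selT _ S S' false k))) (inr i) tt
   : fidx (vS (vbigInd (selT _ S S' false)))).
pose m' := fun p : fidx (vS (vbigInd (selT _ S S' false))) =>
  match p return fidx (vS S') with
  | existT (inr i) _ => i
  | existT (inl j) v => match v with end end.
apply: (@iso_idc' _ _ _ m m') => //.
- by case=> [[j []|i []]].
- move=> i /=; have := comp_idr (varr S' i); by rewrite vdom.
Qed.


Lemma summand (C : coll T) : wIndSys C -> (forall V, C V (vterm V)) ->
  (forall V, C V (vempty V)) ->
  forall V (S S' : vset V), C V (vcoprod S S') -> C V S /\ C V S'.
Proof.
move=> [[hiso _] [_ hb]] ht he V S S' hS; split.
  apply: hiso (sel_l _ S S') _; apply: hb hS _; by case=> i /=.
apply: hiso (sel_r _ S S') _; apply: hb hS _; by case=> i /=.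
Qed.

Definition orbS V (S : vset V) (i : fidx (vS S)) : vset V :=
  @VSet T V (rep (dom (varr S i))) (fun _ => varr S i) (fun _ => erefl)
     (fun _ => vcod S i).

Lemma transport (C : coll T) (a : Ar T) V (e : cod a = V) :
  C (cod a) (orbitV a) <->
  C V (@VSet T V (rep (dom a)) (fun _ => a) (fun _ => erefl) (fun _ => e)).
Proof. by case: V / e. Qed.

Lemma orbS_frak (C : coll T) V (S : vset V) i :
  frakR C (varr S i) <-> C V (orbS _ S i).
Proof. exact: (transport C _ _ (vcod S i)). Qed.

Definition vminus V (S : vset V) (i0 : fidx (vS S)) : vset V :=
  @VSet T V (@FObj T {j : fidx (vS S) | j != i0} (fun j => fo (val j)))
    (fun j => varr S (val j)) (fun j => vdom S (val j)) (fun j => vcod S (val j)).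


Lemma split_iso V (S : vset V) (i0 : fidx (vS S)) :
  vsiso (vcoprod (vminus _ S i0) (orbS _ S i0)) S.
Proof.
pose m := fun k : fidx (vS (vcoprod (vminus _ S i0) (orbS _ S i0))) =>
  match k return fidx (vS S) with inl j => val j | inr _ => i0 end.
pose m' := fun i : fidx (vS S) =>
  (match insub i with Some j => inl j | None => inr tt end
    : fidx (vS (vcoprod (vminus _ S i0) (orbS _ S i0)))).
apply: (@iso_idc _ _ S m m').
- case=> [j|[]] /=; rewrite /m'.
    by rewrite valK.
  by rewrite insubF // eqxx.
- move=> i; rewrite /m'; case: insubP => [j _ <-|] //=.
  by rewrite negbK => /eqP ->.
- by case=> [j|[]] //=; rewrite vdom.
- by case=> [j|[]].
Qed.

Lemma split_iso' V (S : vset V) (i0 : fidx (vS S)) :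
  vsiso S (vcoprod (vminus _ S i0) (orbS _ S i0)).
Proof.
pose m := fun k : fidx (vS (vcoprod (vminus _ S i0) (orbS _ S i0))) =>
  match k return fidx (vS S) with inl j => val j | inr _ => i0 end.
pose m' := fun i : fidx (vS S) =>
  (match insub i with Some j => inl j | None => inr tt end
    : fidx (vS (vcoprod (vminus _ S i0) (orbS _ S i0)))).
apply: (@iso_idc' _ _ S m m').
- case=> [j|[]] /=; rewrite /m'.
    by rewrite valK.
  by rewrite insubF // eqxx.
- move=> i; rewrite /m'; case: insubP => [j _ <-|] //=.
  by rewrite negbK => /eqP ->.
- by case=> [j|[]] //=; rewrite vdom.
- by case=> [j|[]].
Qed.

Lemma build (C : coll T) :
  (forall V (S S' : vset V), vsiso S S' -> C V S -> C V S') ->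
  (forall V, C V (vempty V)) ->
  (forall V (S S' : vset V), C V S -> C V S' -> C V (vcoprod S S')) ->
  forall n V (S : vset V), #|fidx (vS S)| = n ->
  (forall i, C V (orbS _ S i)) -> C V S.
Proof.
move=> hiso he hc; elim=> [|n IH] V S hn ho.
  have no : fidx (vS S) -> False.
    by move=> i; have := card0_eq hn i; rewrite !inE.
  apply: hiso (he V).
  pose m := fun v : fidx (vS (vempty V)) => match v return fidx (vS S) with end.
  pose m' := fun i : fidx (vS S) => False_rect (fidx (vS (vempty V))) (no i).
  apply: (@iso_idc _ _ S m m'); try by case.
  by move=> i; case: (no i).
have : 0 < #|fidx (vS S)| by rewrite hn.
case/card_gt0P => i0 _.
apply: (hiso _ _ _ (split_iso _ S i0)); apply: hc; last exact: ho.
apply: IH; last by move=> j; exact: ho.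
by rewrite card_sig cardC1 hn.
Qed.


Lemma fiso_inv_iso X Y (f : fmor X Y) (g : fmor Y X) :
  fvalid f -> fvalid g -> feq (fcomp g f) (fid X) -> feq (fcomp f g) (fid Y) ->
  forall j, isoT (farr g j).
Proof.
move=> vf vg e1 e2 j; exists (farr f (fmap g j)).
case: (vf (fmap g j)) => d1 c1; case: (vg j) => d2 c2.
case: (e2 j) => /= m2 a2; case: (e1 (fmap g j)) => /= m1 a1.
rewrite m2 in a1.
split; first by rewrite d1 c2.
split; first by rewrite c1 d2 m2.
by rewrite d2 a2 c2 a1.
Qed.

Lemma isoT_id V : isoT (idc V).
Proof.
exists (idc V); rewrite dom_id cod_id; split=>//; split=>//.
by rewrite comp_idid.
Qed.

Definition allR (R : Ar T -> Prop) : coll T := fun V S => forall i, R (varr S i).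

Lemma res_allR R : transfer R -> forall U V a (S : vset V) (X : vset U),
  allR R V S -> isRes a S X -> allR R U X.
Proof.
move=> [hI [hC hP]] U V a S X hS [da [ca [p1 [vp1 [vpX [ep hu]]]]]] x.
pose s := fmap p1 x.
pose Zt := {y : fidx (vS X) | (fmap p1 y == s) && (y != x)}.
pose Zo := @FObj T Zt (fun z => fo (val z)).
pose P := fcoprod (rep (fo x)) Zo.
pose e := fun k : fidx P => match k with inl _ => x | inr z => val z end.
have foe : forall k, fo k = fo (e k) by case.
have p1e : forall k, fmap p1 (e k) = s.
  by case=> [_|z] //=; case/andP: (valP z) => /eqP.
pose p1' := @FMor T P (rep (fo s)) (fun _ => tt) (fun k => farr p1 (e k)).
pose p2' := @FMor T P (rep U) (fun _ => tt) (fun k => varr X (e k)).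
apply: (hP (fo x) U (fo s) V (varr X x) (varr S s) (farr p1 x) a
          (vdom X x) (vcod X x) (vdom S s) (vcod S s) (vp1 x).1 (vp1 x).2 da ca
          _ (hS s) P p1' p2' (finl (rep (fo x)) Zo)).
- exact: (ep x).2.
- split.
    move=> k; split; first by case: k => [[]|z] /=; exact: (vp1 _).1.
    by rewrite (vp1 (e k)).2 p1e.
  split.
    by case=> [[]|z] /=; rewrite vdom vcod.
  split.
    by move=> k /=; split=> //; have := (ep (e k)).2; rewrite /= p1e.
  move=> W q1 q2 vq1 vq2 eq.
  pose q1'' := @FMor T W (vS S) (fun _ => s) (farr q1).
  have vq1'' : fvalid q1'' by move=> w /=; case: (vq1 w) => -> ->.
  have eq'' : feq (fcomp (vstr S) q1'') (fcomp (repArr U V a) q2).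
    by move=> w /=; split => //; exact: (eq w).2.
  case: (hu W q1'' q2 vq1'' vq2 eq'') => u0 [vu0 [e1 [e2 uniq]]].
  have hs : forall w, fmap p1 (fmap u0 w) = s := fun w => (e1 w).1.
  pose lift := fun y : fidx (vS X) =>
    (match insub y with Some z => inr z | None => inl tt end : fidx P).
  have elift : forall y, fmap p1 y = s -> e (lift y) = y.
    move=> y hy; rewrite /lift; case: insubP => [z _ <-|] //=.
    by rewrite hy eqxx /= negbK => /eqP ->.
  have liftK : forall k, lift (e k) = k.
    case=> [[]|z] /=; rewrite /lift; first by rewrite insubF // eqxx andbF.
    by rewrite valK.
  exists (@FMor T W P (fun w => lift (fmap u0 w)) (farr u0)).
  split.
    move=> w; split; first exact: (vu0 w).1.
    have := foe (lift (fmap u0 w)); rewrite (elift _ (hs w)) => ->.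
    exact: (vu0 w).2.
  split.
    move=> w /=; split; first by case: (fmap q1 w).
    rewrite (elift _ (hs w)); exact: (e1 w).2.
  split.
    move=> w /=; split; first by case: (fmap q2 w).
    rewrite (elift _ (hs w)); exact: (e2 w).2.
  move=> u' vu' f1 f2.
  pose uX := @FMor T W (vS X) (fun w => e (fmap u' w)) (farr u').
  have vuX : fvalid uX by move=> w /=; rewrite -foe; exact: (vu' w).
  have g1 : feq (fcomp p1 uX) q1''.
    by move=> w /=; split; [exact: p1e | exact: (f1 w).2].
  have g2 : feq (fcomp (vstr X) uX) q2.
    by move=> w /=; split; [by case: (fmap q2 w) | exact: (f2 w).2].
  have h := uniq uX vuX g1 g2.
  by move=> w /=; case: (h w) => /= -> ->; split=> //; exact: liftK.
- by move=> i /=; rewrite dom_id cod_id.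
- by move=> i /=; split=> //; have := comp_idr (farr p1 x); rewrite (vp1 x).1.
- by move=> i /=; split=> //; have := comp_idr (varr X x); rewrite vdom.
- exists Zo, (fid P); split; first exact: fiso_fid.
  by move=> i /=; split=> //; rewrite comp_idid.
Qed.


Lemma allR_iso R : transfer R -> forall V (S S' : vset V),
  vsiso S S' -> allR R V S -> allR R V S'.
Proof.
move=> [hI [hC _]] V S S' [f [[vf [g [vg [e1 e2]]]] ef]] hS j.
have m2 : fmap f (fmap g j) = j := (e2 j).1.
have a2 : comp (farr f (fmap g j)) (farr g j) = idc (fo j) := (e2 j).2.
have h : comp (varr S' (fmap f (fmap g j))) (farr f (fmap g j)) = varr S (fmap g j)
  := (ef (fmap g j)).2.
rewrite m2 in h.
have c1 : cod (farr g j) = dom (farr f (fmap g j)) by rewrite (vg j).2 (vf _).1.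
have c2 : cod (farr f (fmap g j)) = dom (varr S' j) by rewrite (vf _).2 m2 vdom.
have hj : varr S' j = comp (varr S (fmap g j)) (farr g j).
  rewrite -h -(comp_assoc c1 c2).
  rewrite a2.
  by have := comp_idr (varr S' j); rewrite vdom.
rewrite hj; apply: hC; last exact: hS.
  by rewrite (vg j).2 vdom.
apply: hI; exact: (fiso_inv_iso _ _ f g vf vg e1 e2).
Qed.

Lemma allR_w R : transfer R -> wIndSys (allR R).
Proof.
move=> hR; split; [split|split].
- exact: allR_iso.
- move=> U V a S X hS hr; exact: (res_allR R hR U V a S X hS hr).
- move=> V _ i /=; case: hR => hI _; exact: (hI _ (isoT_id V)).
- move=> V S Tf hS hT [i j] /=; case: hR => [_ [hC _]]; apply: hC.
  + by rewrite vcod vdom.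
  + exact: hT.
  + exact: hS.
Qed.

Lemma F0_sub (C : coll T) : fullTsub C -> (forall V, C V (vterm V)) ->
  (forall V, C V (vempty V)) -> subC (@F0 T) C.
Proof.
move=> [hiso _] ht he V S [h|h]; [exact: hiso _ _ _ h (he V) | exact: hiso _ _ _ h (ht V)].
Qed.

Lemma Fbar_sub R (C : coll T) : wIndSys C -> subC (@F0 T) C -> subC (genR R) C ->
  subC (Fbar R) C.
Proof.
move=> hC h0 hg V S hS; apply: (hS C hC).
move=> V' S' [h|h]; first exact: h0.
exact: h C hC hg.
Qed.

Lemma allR_all (R : Ar T -> Prop) : transfer R -> subC (Fbar R) (allR R).
Proof.
move=> hR; have hw := allR_w R hR.
apply: Fbar_sub => //.
- apply: F0_sub; first exact: hw.1.
  + move=> V i; case: hR => hI _; exact: (hI _ (isoT_id V)).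
  + by move=> V [].
- move=> V X [u [v [Ru hres]]].
  exact: (res_allR R hR _ _ v (orbitV u) X (fun _ => Ru) hres).
Qed.

Lemma orbit_Fbar (R : Ar T -> Prop) a : R a -> @Fbar T R (cod a) (orbitV a).
Proof.
move=> Ra C hC hsub; apply: hsub; right => C' hC' hg; apply: hg.
exists a, (idc (cod a)); split=> //.
split; first exact: dom_id.
split; first exact: cod_id.
exists (fid (rep (dom a))).
split; first by move=> i /=; rewrite dom_id cod_id.
split; first by move=> i /=; split.
split; first by move=> i /=; split=> //; rewrite comp_idr comp_idl.
move=> W q1 q2 vq1 vq2 eq; exists q1.
have hq1 : forall w, comp (idc (dom a)) (farr q1 w) = farr q1 w.
  by move=> w; have := comp_idl (farr q1 w); rewrite (vq1 w).2.
split=> //.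
split; first by move=> w /=; split; [by case: (fmap q1 w) | exact: hq1].
split.
  move=> w /=; split; first by case: (fmap q2 w).
  have h : comp a (farr q1 w) = comp (idc (cod a)) (farr q2 w) := (eq w).2.
  rewrite h; have := comp_idl (farr q2 w); by rewrite (vq2 w).2.
move=> u' vu' f1 f2 w; split; first by case: (fmap q1 w); case: (fmap u' w).
have h : comp (idc (dom a)) (farr u' w) = farr q1 w := (f1 w).2.
by rewrite -h /=; have := comp_idl (farr u' w); rewrite (vu' w).2.
Qed.


Lemma uni_term (D : coll T) : uniWIndSys D -> forall V, D V (vterm V).
Proof. by move=> [[_ [ht _]] [hne _]] V; apply: ht; exact: hne. Qed.

Lemma uni_empty (D : coll T) : uniWIndSys D -> forall V, D V (vempty V).
Proof.
move=> hD V; have ht := uni_term D hD V.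
case: hD => [[[hiso _] _] [_ hs]].
exact: (hs V _ _ (hiso _ _ _ (coprod_empty V (vterm V)) ht)).2.
Qed.

Lemma F0_Fbar (R : Ar T -> Prop) : subC (@F0 T) (Fbar R).
Proof. by move=> V S hS C hC hsub; apply: hsub; left. Qed.

Lemma Fbar_uni (R : Ar T -> Prop) : uniWIndSys (Fbar R).
Proof.
have hw : wIndSys (Fbar R) by exact: Clinf_w.
have ht : forall V, Fbar R (vterm V).
  by move=> V; apply: F0_Fbar; right; exact: vsiso_refl.
have he : forall V, Fbar R (vempty V).
  by move=> V; apply: F0_Fbar; left; exact: vsiso_refl.
split=> //; split; first by move=> V; exists (vterm V).
exact: summand.
Qed.

End Work.

Theorem mainTheorem15 (T : smallCat) (HT : orbital T) :
  (* right adjoint: R |-> (frakR|_IndSys)^{-1}(R), included into wIndSys^uni *)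
  (forall (R : Ar T -> Prop) (C : coll T),
     transfer R -> IndSys C -> (forall a, frakR C a <-> R a) ->
     uniWIndSys C /\
     forall D : coll T, uniWIndSys D -> (subT (frakR D) R <-> subC D C))
  /\
  (* ... which is fully faithful (order-reflecting) *)
  (forall (R R' : Ar T -> Prop) (C C' : coll T),
     transfer R -> transfer R' -> IndSys C -> IndSys C' ->
     (forall a, frakR C a <-> R a) -> (forall a, frakR C' a <-> R' a) ->
     subC C C' -> subT R R')
  /\
  (* left adjoint: R |-> Fbar_R *)
  (forall R : Ar T -> Prop, transfer R ->
     uniWIndSys (Fbar R) /\
     forall D : coll T, uniWIndSys D -> (subC (Fbar R) D <-> subT R (frakR D)))
  /\
  (* ... which is fully faithful (order-reflecting) *)
  (forall R R' : Ar T -> Prop, transfer R -> transfer R' ->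
     subC (Fbar R) (Fbar R') -> subT R R').
Proof.
split.
  move=> R C hR hC hRC; split; first exact: hC.1.
  move=> D hD; split.
    move=> hDR V S hS.
    case: hC => [[[[hiso _] _] _] [he hc]].
    apply: (build T C hiso he hc _ V S erefl) => i.
    have hDo : D V (orbS T V S i).
      case: (hD) => [[[hisoD _] _] [_ hs]].
      exact: (hs V _ _ (hisoD _ _ _ (split_iso' T V S i) hS)).2.
    apply/orbS_frak; apply/hRC; apply: hDR; exact/orbS_frak.
  by move=> hDC a hDa; apply/hRC; exact: hDC _ _ hDa.
split.
  move=> R R' C C' _ _ _ _ h h' hCC a Ra; apply/h'; apply: hCC; exact/h.
split.
  move=> R hR; split; first exact: Fbar_uni.
  move=> D hD; split.
    by move=> hsub a Ra; exact: hsub _ _ (orbit_Fbar T R a Ra).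
  move=> hRD; apply: Fbar_sub; first exact: hD.1.
    apply: F0_sub; [exact: hD.1.1 | exact: uni_term | exact: uni_empty].
  move=> V X [u [v [Ru hres]]].
  exact: (hD.1.1.2 _ _ v (orbitV u) X (hRD u Ru) hres).
move=> R R' hR hR' hsub a Ra.
exact: (allR_all T R' hR' _ _ (hsub _ _ (orbit_Fbar T R a Ra)) tt).
Qed.
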